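(* The string rewriting system $T=D_T\cup A\cup B$ is terminating if and only if the Collatz conjecture holds, i.e. if and only if for every $n\in\mathbb{N}^+$ there is $k\in\mathbb{N}$ with $C^k(n)=1$ (equivalently, every trajectory of the map $\tau(n)=n/2$ for even $n$, $\tau(n)=(3n+1)/2$ for odd $n$, on $\mathbb{N}^+$ contains $1$).
   Context: $C:\mathbb{N}^+\to\mathbb{N}^+$ is the Collatz function $C(n)=n/2$ for $n$ even, $C(n)=3n+1$ for $n$ odd; $C^k$ is the $k$-fold iterate. A string rewriting system $R$ induces $u\ell v\to_R urv$ for each rule $\ell\to r$; it is terminating if there is no infinite rewrite sequence. Alphabet $\{0_2,1_2,0_3,1_3,2_3,\lhd,\rhd\}$. $D_T=\{0_2\rhd\to\rhd,\ 1_2\rhd\to 2_3\rhd\}$; $A=\{0_20_3\to0_30_2,\ 0_21_3\to0_31_2,\ 0_22_3\to1_30_2,\ 1_20_3\to1_31_2,\ 1_21_3\to2_30_2,\ 1_22_3\to2_31_2\}$; $B=\{\lhd0_3\to\lhd1_2,\ \lhd1_3\to\lhd0_20_2,\ \lhd2_3\to\lhd0_21_2\}$. (Intended reading: a string $\lhd d_1\cdots d_k\rhd$ represents the value obtained from $1$ by applying successively $d_1,\dots,d_k$, where $a_b$ acts as $x\mapsto bx+a$.) *)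

(* Defs.v *)
From HB Require Import structures.
From mathcomp Require Import all_boot.
Set Implicit Arguments. Unset Strict Implicit. Unset Printing Implicit Defensive.

Definition collatz (n : nat) : nat := if odd n then 3 * n + 1 else n %/ 2.

Inductive sym : Type := s02 | s12 | s03 | s13 | s23 | lhd | rhd.

Definition sym_eqb (a b : sym) : bool :=
  match a, b with
  | s02, s02 | s12, s12 | s03, s03 | s13, s13 | s23, s23
  | lhd, lhd | rhd, rhd => true
  | _, _ => false
  end.
Lemma sym_eqP : Equality.axiom sym_eqb.
Proof. by case; case; constructor. Qed.
HB.instance Definition _ := hasDecEq.Build sym sym_eqP.

Definition srs := seq (seq sym * seq sym).

Definition D_T : srs :=
  [:: ([:: s02; rhd], [:: rhd]);
      ([:: s12; rhd], [:: s23; rhd])].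

Definition A_rules : srs :=
  [:: ([:: s02; s03], [:: s03; s02]);
      ([:: s02; s13], [:: s03; s12]);
      ([:: s02; s23], [:: s13; s02]);
      ([:: s12; s03], [:: s13; s12]);
      ([:: s12; s13], [:: s23; s02]);
      ([:: s12; s23], [:: s23; s12])].

Definition B_rules : srs :=
  [:: ([:: lhd; s03], [:: lhd; s12]);
      ([:: lhd; s13], [:: lhd; s02; s02]);
      ([:: lhd; s23], [:: lhd; s02; s12])].

Definition T_rules : srs := D_T ++ A_rules ++ B_rules.

Definition rewrite_step (R : srs) (s t : seq sym) : Prop :=
  exists u v l r, (l, r) \in R /\ s = u ++ l ++ v /\ t = u ++ r ++ v.

Definition terminating (R : srs) : Prop :=
  ~ exists f : nat -> seq sym, forall i, rewrite_step R (f i) (f i.+1).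

(* Main.v *)
Require Import Defs.
From mathcomp Require Import all_boot.
From mathcomp Require Import zify.
From Stdlib Require Import Classical ClassicalEpsilon.
Set Implicit Arguments. Unset Strict Implicit. Unset Printing Implicit Defensive.

Definition Rw := rewrite_step T_rules.
Definition SN (s : seq sym) := Acc (fun t s => Rw s t) s.

Definition isbin (x : sym) := match x with s02 | s12 => true | _ => false end.
Definition ister (x : sym) := match x with s03 | s13 | s23 => true | _ => false end.
Definition ismark (x : sym) := match x with lhd | rhd => true | _ => false end.
Definition markerfree (w : seq sym) := all (fun x => ~~ ismark x) w.
Definition bin s := count isbin s.
Definition ter s := count ister s.
Fixpoint inv (s : seq sym) : nat :=
  if s is x :: s' then (if isbin x then ter s' else 0) + inv s' else 0.
Definition act (n : nat) (x : sym) : nat :=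
  match x with s02 => 2*n | s12 => 2*n+1 | s03 => 3*n | s13 => 3*n+1
  | s23 => 3*n+2 | lhd => 1 | rhd => n end.
Definition vfold n w := foldl act n w.

Lemma inv_cat a b : inv (a ++ b) = inv a + inv b + bin a * ter b.
Proof.
elim: a => [|x a IH] /=; first by rewrite /bin /=; lia.
rewrite IH /bin /ter count_cat /=; case: (isbin x) => /=; nia.
Qed.

Lemma rule_facts l r : (l, r) \in T_rules ->
 exists x y, l = [:: x; y] /\ x != rhd /\ y != lhd /\
  ((x == lhd) ==> ((r == lhd :: behead r) && markerfree (behead r))) /\
  ((y == rhd) ==> ((r == rcons (take (size r).-1 r) rhd) && markerfree (take (size r).-1 r))) /\
  count_mem lhd r = count_mem lhd l /\ count_mem rhd r = count_mem rhd l /\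
  ( [&& markerfree l, markerfree r, bin r == bin l, ter r == ter l & inv r < inv l]
     /\ (forall n, vfold n l = vfold n r)
  \/ ((x == lhd) && ~~ ismark y && (ter r < ter l)) /\ (forall n, vfold n l = vfold n r)
  \/ (y == rhd) && (bin r < bin l) &&
      (((x == s02) && (r == [:: rhd])) || ((x == s12) && (r == [:: s23; rhd])))).
Proof.
rewrite /T_rules /D_T /A_rules /B_rules /= !inE.
move=> H; repeat (case/orP: H => [H|H]; [move/eqP: H => [-> ->] | ]);
  try (move/eqP: H => [-> ->]);
  (eexists _, _; split; [reflexivity|];
  do 6 (split; first done);
  first [left; split; [done | move=> n /=; lia]
        | right; left; split; [done| move=> n/=; lia] | right; right; done]).
Qed.


Lemma cat_eq_cat (a b c d : seq sym) : a ++ b = c ++ d ->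
  (exists e, c = a ++ e /\ b = e ++ d) \/ (exists e, a = c ++ e /\ d = e ++ b).
Proof.
elim: a c => [|x a IH] c /=; first by move=> ->; left; exists c.
case: c => [|y c] /=; first by move=> <-; right; exists (x :: a).
case=> -> /IH [[e [-> ->]]|[e [-> ->]]]; [left|right]; by exists e.
Qed.

Lemma split_rhd P Q t : Rw (P ++ rhd :: Q) t ->
  (exists P', t = P' ++ rhd :: Q /\ Rw (rcons P rhd) (rcons P' rhd)) \/
  (exists Q', t = P ++ rhd :: Q' /\ Rw Q Q').
Proof.
move=> [u [v [l [r [mem [Es ->]]]]]].
have [x [y [El [xr [yl [imx [imy _]]]]]]] := rule_facts mem.
subst l.
case/cat_eq_cat: (esym Es) => [[e [EP Ee]]|[e [Eu Ee]]].
- case: e EP Ee => [|e1 [|e2 e]] EP /=.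
  + by case=> Ex; rewrite Ex eqxx in xr.
  + case=> Ex1 Ey Ev; subst e1 v. rewrite Ey eqxx /= in imy.
    case/andP: imy => /eqP Er _.
    left; exists (u ++ take (size r).-1 r); split.
    * by rewrite {1}Er -cats1 -!catA.
    * exists u, [::], [:: x; y], r; split; first done.
      rewrite EP Ey !cats0 -!cats1 -!catA; split => //.
      by rewrite cats1 -Er.
  + case=> Ex1 Ey1 Ev; subst e1 e2; left; exists (u ++ r ++ e); split.
    * by rewrite Ev -!catA.
    * exists u, (rcons e rhd), [:: x; y], r; split => //.
      by rewrite EP -!cats1 -!catA.
- case: e Eu Ee => [|e1 e] Eu /=.
  + by case=> Ex; rewrite Ex eqxx in xr.
  + case=> Ee1 EQ; subst e1; right; exists (e ++ r ++ v); split.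
    * by rewrite Eu -catA.
    * by exists e, v, [:: x; y], r.
Qed.

Lemma split_lhd P Q t : Rw (P ++ lhd :: Q) t ->
  (exists P', t = P' ++ lhd :: Q /\ Rw P P') \/
  (exists Q', t = P ++ lhd :: Q' /\ Rw (lhd :: Q) (lhd :: Q')).
Proof.
move=> [u [v [l [r [mem [Es ->]]]]]].
have [x [y [El [xr [yl [imx [imy _]]]]]]] := rule_facts mem.
subst l.
case/cat_eq_cat: (esym Es) => [[e [EP Ee]]|[e [Eu Ee]]].
- case: e EP Ee => [|e1 [|e2 e]] EP /=.
  + case=> Ex Ev; rewrite Ex eqxx /= in imx.
    case/andP: imx => /eqP Er _.
    right; exists (behead r ++ v); split.
    * by rewrite EP cats0 {1}Er.
    * exists [::], v, [:: x; y], r; split => //; split; first by rewrite Ex -Ev.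
      by case: (r) Er => [|a b] //= /(congr1 (head lhd)) /= ->; by rewrite ?Ex.
  + by case=> _ Ey; rewrite Ey eqxx in yl.
  + case=> Ex1 Ey1 Ev; subst e1 e2; left; exists (u ++ r ++ e); split.
    * by rewrite Ev -!catA.
    * by exists u, e, [:: x; y], r; rewrite EP.
- case: e Eu Ee => [|e1 e] Eu /=.
  + case=> Ex EQ; rewrite Ex eqxx /= in imx.
    case/andP: imx => /eqP Er _.
    right; exists (behead r ++ v); split.
    * rewrite Eu cats0; case: (r) Er => [|a b] //= /(congr1 (head lhd)) /= ->; by rewrite Ex.
    * exists [::], v, [:: x; y], r; split => //; split; first by rewrite Ex EQ.
      by case: (r) Er => [|a b] //= /(congr1 (head lhd)) /= ->; by rewrite ?Ex.
  + case=> Ee1 EQ; subst e1; right; exists (e ++ r ++ v); split.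
    * by rewrite Eu -catA.
    * by exists (lhd :: e), v, [:: x; y], r; rewrite EQ.
Qed.

Lemma comb_rhd P Q : SN (rcons P rhd) -> SN Q -> SN (P ++ rhd :: Q).
Proof.
suff K : forall x, SN x -> forall P, x = rcons P rhd -> forall Q, SN Q -> SN (P ++ rhd :: Q).
  by move=> H1 H2; apply: (K _ H1 P erefl).
move=> x H1; elim: H1 => {}x _ IH1 P0 Ex Q0 H2.
subst x.
elim: H2 => {}Q0 H2 IH2.
apply: Acc_intro => t /split_rhd [[P' [-> HR]]|[Q' [-> HR]]].
- exact: (IH1 (rcons P' rhd) HR P' erefl Q0 (Acc_intro Q0 H2)).
- exact: (IH2 Q' HR).
Qed.

Lemma comb_lhd P Q : SN P -> SN (lhd :: Q) -> SN (P ++ lhd :: Q).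
Proof.
move=> H1; elim: H1 Q => {}P _ IH1 Q H2.
suff K : forall y, SN y -> forall Q, y = lhd :: Q -> SN (P ++ lhd :: Q) by apply: K H2 Q erefl.
move=> y H3; elim: H3 => {}y H3 IH2 Q0 Ey.
subst y.
apply: Acc_intro => t /split_lhd [[P' [-> HR]]|[Q' [-> HR]]].
- exact: (IH1 P' HR Q0 (Acc_intro _ H3)).
- exact: (IH2 (lhd :: Q') HR Q' erefl).
Qed.

Lemma lex_acc (Q : seq sym -> Prop) (f g : seq sym -> nat) :
  (forall s t, Q s -> Rw s t -> SN t \/ (Q t /\ (f t < f s \/ (f t = f s /\ g t < g s)))) ->
  forall s, Q s -> SN s.
Proof.
move=> H.
suff K : forall a b s, f s <= a -> g s <= b -> Q s -> SN s.
  by move=> s; apply: (K (f s) (g s)).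
elim=> [|a IHa] b; elim: b => [|b IHb] s Hf Hg Qs; constructor => t Rst;
  case: (H s t Qs Rst) => [//|[Qt [lt|[eq lt]]]]; try lia.
- apply: (IHb t) => //; lia.
- apply: (IHa (g t)) => //; lia.
- apply: (IHa (g t)) => //; lia.
- apply: (IHb t) => //; lia.
Qed.


Lemma measA (u v l r : seq sym) : bin r = bin l -> ter r = ter l -> inv r < inv l ->
  ter (u ++ r ++ v) = ter (u ++ l ++ v) /\ inv (u ++ r ++ v) < inv (u ++ l ++ v).
Proof.
move=> eb et lt; rewrite !inv_cat /bin /ter !count_cat.
rewrite /bin /ter in eb et; rewrite eb et; split; lia.
Qed.

Lemma measB (u v l r : seq sym) : ter r < ter l -> ter (u ++ r ++ v) < ter (u ++ l ++ v).
Proof. rewrite /ter !count_cat; lia. Qed.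

Lemma measD (u v l r : seq sym) : bin r < bin l -> bin (u ++ r ++ v) < bin (u ++ l ++ v).
Proof. rewrite /bin !count_cat; lia. Qed.

Lemma base_a s : count_mem lhd s = 0 -> SN s.
Proof.
move=> H; apply: (lex_acc (Q := fun s => count_mem lhd s = 0) (f := bin) (g := inv)) H.
move=> {}s t Hs [u [v [l [r [mem [Es Et]]]]]].
have [x [y [El [xr [yl [imx [imy [cl [cr Hc]]]]]]]]] := rule_facts mem.
right; subst s t; split; first by move: Hs; rewrite !count_cat cl.
case: Hc => [[/and5P [_ _ /eqP eb /eqP et lt] _]|[[/andP [/andP [/eqP ex _] _] _]|/andP [/andP [_ lt] _]]].
- right; have [_ M] := measA u v eb et lt; split => //.
  by rewrite /bin !count_cat; rewrite /bin in eb; rewrite eb.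
- by move: Hs; rewrite El ex !count_cat /=; lia.
- by left; apply: measD.
Qed.

Lemma base_b s : count_mem rhd s = 0 -> SN s.
Proof.
move=> H; apply: (lex_acc (Q := fun s => count_mem rhd s = 0) (f := ter) (g := inv)) H.
move=> {}s t Hs [u [v [l [r [mem [Es Et]]]]]].
have [x [y [El [xr [yl [imx [imy [cl [cr Hc]]]]]]]]] := rule_facts mem.
right; subst s t; split; first by move: Hs; rewrite !count_cat cr.
case: Hc => [[/and5P [_ _ /eqP eb /eqP et lt] _]|[[/andP [/andP [_ _] lt] _]|/andP [/andP [/eqP ey _] _]]].
- by right; apply: measA.
- by left; apply: measB.
- by move: Hs; rewrite El ey !count_cat /=; lia.
Qed.

Lemma collatz_even m : collatz (2 * m) = m.
Proof. by rewrite /collatz oddM andFb mulKn. Qed.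

Lemma collatz_odd m : collatz (2 * m + 1) = 6 * m + 4.
Proof. rewrite /collatz addn1 oddS oddM /=; lia. Qed.

Lemma collatz_64 m : collatz (6 * m + 4) = 3 * m + 2.
Proof. by rewrite (_ : 6 * m + 4 = 2 * (3 * m + 2)) ?collatz_even //; lia. Qed.

Lemma vfold_pos n w : 0 < n -> 0 < vfold n w.
Proof.
elim: w n => //= x w IH n Hn; apply: IH; case: x => /=; lia.
Qed.

Lemma mf_nomark w a : markerfree w -> ismark a -> a \in w -> False.
Proof. by move=> /allP mw ma /mw; rewrite ma. Qed.

Lemma step_shape w t : markerfree w -> Rw (lhd :: rcons w rhd) t ->
  exists w', [/\ markerfree w', t = lhd :: rcons w' rhd &
  ((vfold 1 w' = vfold 1 w /\ (ter t < ter (lhd :: rcons w rhd) \/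
       ter t = ter (lhd :: rcons w rhd) /\ inv t < inv (lhd :: rcons w rhd)))
   \/ (vfold 1 w != 1 /\ vfold 1 w' = collatz (vfold 1 w))
   \/ (vfold 1 w != 1 /\ collatz (vfold 1 w) != 1 /\
         vfold 1 w' = collatz (collatz (vfold 1 w))))].
Proof.
move=> mw [u [v [l [r [mem [Es Et]]]]]].
have [x [y [El [xr [yl [imx [imy [cl [cr Hc]]]]]]]]] := rule_facts mem.
subst l.
case: Hc => [[/and5P [ml mr /eqP eb /eqP et lt] Hv]|[[/andP [/andP [/eqP ex ny] lt] Hv]|/andP [/andP [/eqP ey lt] Hr]]].
-
  have M : ter t = ter (lhd :: rcons w rhd) /\ inv t < inv (lhd :: rcons w rhd).
    by rewrite Et Es; apply: measA.
  case: u Es Et => [|z u] /= Es Et.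
  + by case: Es => Ex _; rewrite -Ex in ml.
  + case: Es => Ez Ew.
    case/lastP: v Ew Et => [|v q] Ew Et.
    * have := congr1 (last lhd) Ew; rewrite last_rcons last_cat /= => Ey.
      by rewrite -Ey /markerfree /= andbF in ml.
    * have /eqP := Ew; rewrite (_ : u ++ [:: x, y & rcons v q] = rcons (u ++ [:: x; y] ++ v) q);
        last by rewrite -!cats1 -!catA.
      rewrite eqseq_rcons => /andP [/eqP Ew2 /eqP Eq].
      exists (u ++ r ++ v); split.
      -- by move: mw ml mr; rewrite Ew2 /markerfree !all_cat => /and3P [-> _ ->] _ ->.
      -- by rewrite Et -Ez -Eq -!cats1 -!catA.
      -- left; split; last by right; exact: M.
         rewrite Ew2 /vfold !foldl_cat.
         by have := Hv (foldl act 1 u); rewrite /vfold => ->.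
-
  have M : ter t < ter (lhd :: rcons w rhd) by rewrite Et Es; apply: measB.
  subst x.
  case: u Es Et => [|z u] /= Es Et.
  + case: Es => Ew.
    case: w mw Ew M => [|w0 w1] mw /= Ew M.
    * by case: Ew => Ey; rewrite -Ey in ny.
    * case: Ew => Ey Ev; subst w0 v.
      rewrite eqxx /= in imx; case/andP: imx => /eqP Er mr.
      exists (behead r ++ w1); split.
      -- rewrite /markerfree all_cat; apply/andP; split => //; by move: mw => /= /andP [].
      -- by rewrite Et {1}Er rcons_cat.
      -- left; split; last by left; exact: M.
         rewrite /vfold foldl_cat /=.
         have E1 : foldl act 1 r = foldl act 1 (behead r).
           by case: (r) Er => [|a b] //= /(congr1 (head lhd)) /= ->.
         by have := Hv 1; rewrite /vfold /= E1 => ->.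
  + case: Es => Ez Ew; exfalso.
    apply: (@mf_nomark w lhd mw erefl).
    have : lhd \in rcons w rhd by rewrite Ew mem_cat inE eqxx orbT.
    by rewrite mem_rcons inE.
-
  subst y.
  case: u Es Et => [|z u] /= Es Et.
  + case: Es => Ex; case/orP: Hr => /andP [/eqP Ex' _]; congruence.
  + case: Es => Ez Ew.
    case/lastP: v Ew Et => [|v q] Ew Et.
    * have /eqP := Ew; rewrite (_ : u ++ [:: x; rhd] = rcons (rcons u x) rhd);
        last by rewrite -!cats1 -!catA.
      rewrite eqseq_rcons andbT => /eqP Ew2.
      have mu : markerfree u by move: mw; rewrite Ew2 /markerfree all_rcons => /andP [].
      have pos := vfold_pos u (ltn0Sn 0).
      case/orP: Hr => /andP [/eqP Ex /eqP Er]; subst x r.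
      -- exists u; split => //.
         ++ by rewrite Et -Ez cats0 -cats1.
         ++ right; left; rewrite Ew2 /vfold foldl_rcons -/(vfold 1 u) /=.
            rewrite collatz_even; split => //; lia.
      -- exists (rcons u s23); split => //.
         ++ by rewrite /markerfree all_rcons; apply/andP; split.
         ++ by rewrite Et -Ez cats0 -!cats1 -catA.
         ++ right; right; rewrite Ew2 /vfold !foldl_rcons -/(vfold 1 u) /=.
            rewrite collatz_odd collatz_64; split; first lia; split => //; lia.
    * exfalso; apply: (@mf_nomark w rhd mw erefl).
      have /eqP := Ew; rewrite (_ : u ++ [:: x, rhd & rcons v q] = rcons (u ++ [:: x; rhd] ++ v) q);
        last by rewrite -!cats1 -!catA.
      rewrite eqseq_rcons => /andP [/eqP -> _].
      by rewrite !mem_cat !inE eqxx !orbT.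
Qed.


Lemma coll_base k : forall w, markerfree w -> iter k collatz (vfold 1 w) = 1 ->
  SN (lhd :: rcons w rhd).
Proof.
elim/ltn_ind: k => k IHk w mw Hk.
apply: (lex_acc (Q := fun s => exists w', [/\ markerfree w', s = lhd :: rcons w' rhd
   & vfold 1 w' = vfold 1 w]) (f := ter) (g := inv)); last by exists w.
move=> s t [w' [mw' -> ev]] Rst.
have [w'' [mw'' -> H]] := step_shape mw' Rst.
rewrite ev in H.
case: H => [[e M]|[[ne e]|[ne [ne2 e]]]].
- by right; split => //; exists w''; split => //; rewrite e.
- left; case: k Hk IHk => [|k] Hk IHk; first by rewrite /= in Hk; rewrite Hk eqxx in ne.
  apply: (IHk k) => //; by rewrite e -iterSr.
- left; case: k Hk IHk => [|k] Hk IHk; first by rewrite /= in Hk; rewrite Hk eqxx in ne.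
  case: k Hk IHk => [|k] Hk IHk; first by rewrite /= in Hk; rewrite Hk eqxx in ne2.
  apply: (IHk k) => //; by rewrite e -!iterSr.
Qed.

Lemma mf_cnt w : markerfree w -> count_mem lhd w = 0 /\ count_mem rhd w = 0.
Proof.
elim: w => //= x w IH /andP [nx /IH [-> ->]]; by case: x nx.
Qed.

Lemma first_marker s : markerfree s \/
  exists w m Q, [/\ markerfree w, ismark m & s = w ++ m :: Q].
Proof.
elim: s => [|x s [mf|[w [m [Q [mw mm ->]]]]]]; first by left.
- case mx: (ismark x); first by right; exists [::], x, s.
  by left; rewrite /markerfree /= mx.
- case mx: (ismark x); first by right; exists [::], x, (w ++ m :: Q).
  by right; exists (x :: w), m, Q; rewrite /markerfree /= mx.
Qed.

Lemma all_SN (Hc : forall n : nat, 0 < n -> exists k : nat, iter k collatz n = 1) n :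
  forall s, size s < n -> SN s /\ SN (lhd :: s).
Proof.
elim: n => [|n IH] s Hs; first by exfalso; rewrite ltn0 in Hs.
case: (first_marker s) => [mf | [w [m [Q [mw mm Es]]]]].
- have [c1 c2] := mf_cnt mf.
  by split; [apply: base_a | apply: base_b]; rewrite /= ?c1 ?c2.
- have HQ : size Q < n by move: Hs; rewrite Es size_cat /=; lia.
  have [IH1 IH2] := IH Q HQ.
  have [c1 c2] := mf_cnt mw.
  case: m mm Es => mm Es; try (exfalso; by []); split; rewrite Es.
  + apply: comb_lhd; last exact: IH2. by apply: base_a.
  + rewrite -cat_cons; apply: comb_lhd; last exact: IH2.
    apply: base_b; by rewrite /= c2.
  + apply: comb_rhd; last exact: IH1.
    apply: base_a; by rewrite -cats1 count_cat c1.
  + rewrite -cat_cons; apply: comb_rhd; last exact: IH1.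
    have [k Hk] := Hc (vfold 1 w) (vfold_pos w (ltn0Sn 0)).
    exact: coll_base Hk.
Qed.

Lemma SN_noinf s : SN s -> forall f, f 0 = s -> (forall i, Rw (f i) (f i.+1)) -> False.
Proof.
elim => {}s _ IH f E H.
apply: (IH (f 1) _ (fun i => f i.+1) erefl (fun i => H i.+1)).
by rewrite -E; exact: H 0.
Qed.

Lemma rep n : 0 < n -> exists w, markerfree w /\ vfold 1 w = n.
Proof.
elim/ltn_ind: n => n IH Hn.
case: (n =P 1) => [->|n1]; first by exists [::].
have E := odd_double_half n.
have [w [mw ew]] : exists w, markerfree w /\ vfold 1 w = n./2.
  apply: IH; move: E; rewrite -mul2n; case: (odd n) => /= E; lia.
exists (rcons w (if odd n then s12 else s02)); split.
- by rewrite /markerfree all_rcons; case: (odd n).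
- rewrite /vfold foldl_rcons -/(vfold 1 w) ew; move: E; rewrite -mul2n.
  case: (odd n) => /= E; lia.
Qed.

Definition swapA (a b : sym) : seq sym :=
  match a, b with
  | s02, s03 => [:: s03; s02] | s02, s13 => [:: s03; s12] | s02, s23 => [:: s13; s02]
  | s12, s03 => [:: s13; s12] | s12, s13 => [:: s23; s02] | s12, s23 => [:: s23; s12]
  | _, _ => [::] end.

Definition Brhs (a : sym) : seq sym :=
  match a with s03 => [:: lhd; s12] | s13 => [:: lhd; s02; s02] | _ => [:: lhd; s02; s12] end.

Lemma adj w x : markerfree (x :: w) -> ~~ isbin (last x w) ->
  ister x \/ exists u a b v, [/\ x :: w = u ++ a :: b :: v, isbin a & ister b].
Proof.
elim: w x => [|y w IH] x /=.
- by move=> /andP [nx _] nb; left; case: x nx nb.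
- move=> /andP [nx mw] nl.
  case tx: (ister x); first by left.
  right; have bx : isbin x by case: x nx tx.
  case: (IH y mw nl) => [ty|[u [a [b [v [E ba tb]]]]]].
  + by exists [::], x, y, w.
  + by exists (x :: u), a, b, v; rewrite E.
Qed.

Lemma step_exists w : markerfree w -> w != [::] -> exists t, Rw (lhd :: rcons w rhd) t.
Proof.
case: w => // x w' mw _.
case bz: (isbin (last x w')).
- rewrite (_ : rcons (x :: w') rhd = rcons (rcons (belast x w') (last x w')) rhd); last by rewrite -lastI.
  move: bz; case: (last x w') => // _.
  + exists (lhd :: rcons (belast x w') rhd).
    exists (lhd :: belast x w'), [::], [:: s02; rhd], [:: rhd]; split => //.
    by rewrite /= -!cats1 -?catA ?cats0.
  + exists (lhd :: rcons (rcons (belast x w') s23) rhd).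
    exists (lhd :: belast x w'), [::], [:: s12; rhd], [:: s23; rhd]; split => //.
    by rewrite /= -!cats1 -?catA ?cats0.
- case: (adj mw (negbT bz)) => [tx | [u [a [b [v [E ba tb]]]]]].
  + exists (Brhs x ++ rcons w' rhd).
    exists [::], (rcons w' rhd), [:: lhd; x], (Brhs x); split => //.
    by clear bz mw; case: x tx.
  + rewrite E; exists ((lhd :: u) ++ swapA a b ++ rcons v rhd).
    exists (lhd :: u), (rcons v rhd), [:: a; b], (swapA a b); split => //.
    * by clear E; case: a ba; case: b tb.
    * by rewrite rcons_cat.
Qed.

Theorem mainTheorem6 :
  terminating T_rules <->
  (forall n : nat, 0 < n -> exists k : nat, iter k collatz n = 1).
Proof.
split.
- move=> Ht n Hn; apply: NNPP => Hno.
  have Hno' : forall k, iter k collatz n != 1.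
    by move=> k; apply/eqP => E; apply: Hno; exists k.
  pose Inv s := exists w k, [/\ markerfree w, s = lhd :: rcons w rhd
                                & vfold 1 w = iter k collatz n].
  have Hex : forall s, exists t, Inv s -> Rw s t.
    move=> s; case: (classic (Inv s)) => [[w [k [mw -> e]]]|nI]; last first.
      by exists s.
    have wn : w != [::].
      by apply/eqP => E; move: (Hno' k); rewrite -e E.
    have [t Ht'] := step_exists mw wn; by exists t.
  pose g s := proj1_sig (constructive_indefinite_description _ (Hex s)).
  have Hg : forall s, Inv s -> Rw s (g s).
    by move=> s; rewrite /g; case: (constructive_indefinite_description _ _).
  have Inv_pres : forall s, Inv s -> Inv (g s).
    move=> s Is; have Rs := Hg s Is.
    case: Is Rs => [w [k [mw -> e]]] Rs.
    have [w' [mw' Et H]] := step_shape mw Rs.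
    exists w'; case: H => [[e' _]|[[_ e']|[_ [_ e']]]].
    + by exists k; rewrite e' e.
    + by exists k.+1; rewrite e' e iterS.
    + by exists k.+2; rewrite e' e !iterS.
  have [w0 [mw0 e0]] := rep Hn.
  have Iall : forall i, Inv (iter i g (lhd :: rcons w0 rhd)).
    elim => [|i IH]; last exact: Inv_pres.
    by exists w0, 0.
  apply: Ht; exists (fun i => iter i g (lhd :: rcons w0 rhd)).
  move=> i; exact: Hg (Iall i).
- move=> Hc [f Hf].
  have [H _] := all_SN Hc (ltnSn (size (f 0))).
  exact: SN_noinf H f erefl Hf.
Qed.
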